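(* Let $A>0$ and let $\tilde n,\tilde m$ be probability measures on $\mathbb R$ with finite second moment such that $\int y\,\tilde n(dy)=\int y\,\tilde m(dy)$. Then \[W_2\big(T(\tilde n),T(\tilde m)\big)\leq\frac{1}{\sqrt2}\,W_2(\tilde n,\tilde m).\]
   Context: $\Gamma_{A/2}(y):=\frac{1}{\sqrt{2\pi A}}e^{-|y|^2/A}$ (Gaussian density of variance $A/2$). For a probability measure $\tilde n$ on $\mathbb R$ with finite second moment, $T(\tilde n)$ is the probability density \[T(\tilde n)(y):=\int\!\!\int\Gamma_{A/2}\Big(y-\frac{y_*+y_*'}{2}\Big)\,\tilde n(dy_* )\,\tilde n(dy_*').\] $W_2$ is the quadratic Wasserstein distance: $W_2(\mu,\nu)^2=\inf_\pi\int|x-y|^2\,d\pi(x,y)$, infimum over probability measures $\pi$ on $\mathbb R^2$ with marginals $\mu$ and $\nu$. *)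

(* Defs.v *)
From HB Require Import structures.
From mathcomp Require Import all_boot all_order all_algebra.
From mathcomp Require Import all_classical all_reals all_analysis.
Set Implicit Arguments. Unset Strict Implicit. Unset Printing Implicit Defensive.
Import Order.TTheory GRing.Theory Num.Theory.
Import numFieldNormedType.Exports.
Local Open Scope classical_set_scope.
Local Open Scope ring_scope.

(* Gaussian density of variance A/2 (normalized):
   Gamma_{A/2}(y) = (pi A)^{-1/2} exp(-y^2/A). *)
Definition Gauss {R : realType} (A : R) (y : R) : R :=
  (Num.sqrt (pi * A))^-1 * expR (- (y ^+ 2) / A).

Definition Tdens {R : realType} (A : R) (n : probability R R) (y : R) : \bar R :=
  (\int[n \x n]_(z in setT) (Gauss A (y - (z.1 + z.2) / 2))%:E)%E.

Definition Tmeas {R : realType} (A : R) (n : probability R R) : set R -> \bar R :=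
  fun B => (\int[lebesgue_measure]_(y in B) Tdens A n y)%E.

Definition coupling {R : realType} (mu nu : set R -> \bar R)
    (p : probability (R * R)%type R) : Prop :=
  (forall B : set R, measurable B -> p (B `*` setT) = mu B) /\
  (forall B : set R, measurable B -> p (setT `*` B) = nu B).

Definition W2sq {R : realType} (mu nu : set R -> \bar R) : \bar R :=
  ereal_inf [set (\int[p]_(z in setT) (((z.1 - z.2) ^+ 2)%:E))%E
            | p in [set p | coupling mu nu p]].

Definition W2 {R : realType} (mu nu : set R -> \bar R) : \bar R :=
  match W2sq mu nu with
  | r%:E => (Num.sqrt r)%:E
  | +oo%E => +oo%E
  | -oo%E => -oo%E
  end.

(* Main.v *)
Require Import Defs.
From HB Require Import structures.
From mathcomp Require Import all_boot all_order all_algebra.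
From mathcomp Require Import all_classical all_reals all_analysis.
From mathcomp Require Import measurable_realfun.
From mathcomp Require Import ring lra.
Import Order.TTheory GRing.Theory Num.Theory.
Import numFieldNormedType.Exports.
Local Open Scope classical_set_scope.
Local Open Scope ring_scope.
Set Implicit Arguments. Unset Strict Implicit. Unset Printing Implicit Defensive.

Section P1.
Variable R : realType.
Local Notation mu := (@lebesgue_measure R).

Lemma leb_shift (c : R) (B : set R) : measurable B ->
  mu ((fun t => t + c) @^-1` B) = mu B.
Proof.
move=> mB.
have -> : mu ((fun t => t + c) @^-1` B) =
  pushforward mu ((fun t => t + c) : R -> measurableTypeR R) B by [].
apply/esym/lebesgue_measure_unique; first exact: measurable_funD.
  move=> mf _ [[a b]] _ <-.
  change (mu `]a, b] = mu ((fun t => t + c) @^-1` `]a, b])).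
  have -> : (fun t => t + c) @^-1` `]a, b] = `]a - c, b - c]%classic :> set R.
    apply/seteqP; split => x /=; rewrite !in_itv /= => /andP[h1 h2];
    apply/andP; split; lra.
  rewrite !lebesgue_measure_itv/= !lte_fin.
  have -> : (a - c < b - c) = (a < b) by apply/idP/idP; lra.
  by case: ifP => // _; rewrite -!EFinD; congr EFin; lra.
exact: mB.
Qed.
End P1.

Section P2.
Variable R : realType.
Local Notation mu := (@lebesgue_measure R).

Lemma integral_shift (c : R) (B : set R) (f : R -> \bar R) :
  measurable B -> measurable_fun setT f -> (forall x, (0 <= f x)%E) ->
  (\int[mu]_(y in B) f y = \int[mu]_(t in (fun t => t + c)%R @^-1` B) f (t + c)%R)%E.
Proof.
move=> mB mf f0.
have mphi : measurable_fun setT ((fun t => t + c) : measurableTypeR R -> measurableTypeR R).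
  exact: measurable_funD.
rewrite -(ge0_integral_pushforward mphi) //.
- apply: eq_measure_integral => A mA AB.
  first [exact: leb_shift | exact/esym/leb_shift].
- exact: measurable_funTS.
Qed.

Lemma GaussE (A : R) : 0 < A -> Gauss A = normal_pdf 0 (Num.sqrt (A / 2)).
Proof.
move=> A0; apply/funext => y.
have s0 : Num.sqrt (A / 2) != 0 by rewrite gt_eqF // sqrtr_gt0 divr_gt0.
rewrite normal_pdfE //= /normal_peak /normal_fun /Gauss sqr_sqrtr ?divr_ge0 ?ltW //.
rewrite subr0; congr (_^-1 * expR _); first by congr Num.sqrt; rewrite -mulr_natr; field.
rewrite -mulr_natr; field; lra.
Qed.
End P2.

Section Transfer.
Variables (R : realType) (pi0 : probability (R*R)%type R) (nn : probability R R).
Variable proj : R * R -> R.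
Hypothesis mproj : measurable_fun setT proj.
Hypothesis hproj : forall B, measurable B -> pi0 (proj @^-1` B) = nn B.

Lemma transfer_ge0 (phi : R -> \bar R) : measurable_fun setT phi ->
  (forall x, (0 <= phi x)%E) ->
  (\int[pi0]_z phi (proj z) = \int[nn]_y phi y)%E.
Proof.
move=> mphi phi0.
have := ge0_integral_pushforward mproj pi0 (D := setT) measurableT mphi (fun y _ => phi0 y).
rewrite preimage_setT => <-.
apply: eq_measure_integral => B mB _.
exact: hproj.
Qed.

Lemma transfer (phi : R -> \bar R) : measurable_fun setT phi ->
  pi0.-integrable setT (fun z => phi (proj z)) ->
  (\int[pi0]_z phi (proj z) = \int[nn]_y phi y)%E.
Proof.
move=> mphi iphi.
have := integral_pushforward mproj mphi (D := setT) (mu := pi0).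
rewrite preimage_setT => <- //.
apply: eq_measure_integral => B mB _.
exact: hproj.
Qed.

End Transfer.

Definition Gn (R : realType) (A : R) : probability (measurableTypeR R) R :=
  normal_prob 0 (Num.sqrt (A / 2)).
Definition Pp (R : realType) (A : R) (pi0 : probability (R*R)%type R) :=
  ((pi0 \x pi0) \x Gn A)%E.

Definition prodP (R : realType) (nn : probability R R) : probability (R*R)%type R :=
  (nn \x nn)%E.

Section Kern.
Variables (R : realType) (A : R) (B : set R).
Hypothesis mB : measurable B.
Local Notation mu := (@lebesgue_measure R).
Local Notation g := (normal_pdf 0 (Num.sqrt (A / 2))).

Definition Kf (p : R * measurableTypeR R) : \bar R := (\1_B p.2 * g (p.2 - p.1))%:E.

Lemma mKf : measurable_fun setT Kf.
Proof.
apply/measurable_EFinP; apply: measurable_funM.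
  apply: (@measurableT_comp _ _ _ _ _ _ (\1_B : measurableTypeR R -> R)); last exact: measurable_snd.
  exact: measurable_indic.
apply: measurableT_comp (measurable_normal_pdf _ _) _.
exact: measurable_funB measurable_snd measurable_fst.
Qed.

Lemma Kf0 p : (0 <= Kf p)%E.
Proof. by rewrite lee_fin mulr_ge0 // normal_pdf_ge0. Qed.

Definition Hf (c : R) : \bar R := (\int[mu]_y Kf (c, y))%E.

Lemma mHf : measurable_fun setT Hf.
Proof. exact: (measurable_fun_fubini_tonelli_F Kf mKf Kf0). Qed.

Lemma Hf0 c : (0 <= Hf c)%E.
Proof. by apply: integral_ge0 => y _; exact: Kf0. Qed.

Lemma HfE c : Hf c = (\int[mu]_(y in B) (g (y - c))%:E)%E.
Proof.
rewrite integral_mkcond; apply: eq_integral => y _.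
by rewrite /Kf /patch indicE; case: (y \in B); rewrite ?mul1r ?mul0r.
Qed.

End Kern.

Section Marg.
Variables (R : realType) (A : R) (pi0 : probability (R*R)%type R) (nn : probability R R).
Hypothesis A0 : 0 < A.
Variable proj : R * R -> R.
Hypothesis mproj : measurable_fun setT proj.
Hypothesis hproj : forall B, measurable B -> pi0 (proj @^-1` B) = nn B.
Variables (B : set R).
Hypothesis mB : measurable B.
Local Notation mu := (@lebesgue_measure R).
Local Notation g := (normal_pdf 0 (Num.sqrt (A / 2))).
Local Notation H := (Hf A B).

Definition Emap (w : (R * R) * (R * R) * measurableTypeR R) : R :=
  w.2 + (proj w.1.1 + proj w.1.2) / 2.

Lemma stepab : Pp A pi0 (Emap @^-1` B) =
  (\int[(pi0 \x pi0)%E]_x H ((proj x.1 + proj x.2) / 2))%E.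
Proof.
change (\int[(pi0 \x pi0)%E]_x (Gn A (xsection (Emap @^-1` B) x)) =
  \int[(pi0 \x pi0)%E]_x H ((proj x.1 + proj x.2) / 2))%E.
apply: eq_integral => x _.
rewrite HfE // (integral_shift ((proj x.1 + proj x.2) / 2)) //; last 2 first.
- apply/measurable_EFinP; apply: measurableT_comp (measurable_normal_pdf _ _) _.
  exact: measurable_funB.
- by move=> y; rewrite lee_fin normal_pdf_ge0.
have -> : xsection (Emap @^-1` B) x =
    (fun t => t + (proj x.1 + proj x.2) / 2) @^-1` B.
  by apply/seteqP; split => t; rewrite /xsection /Emap /= inE.
by apply: eq_integral => t _; rewrite addrK.
Qed.


Lemma mHsum : measurable_fun setT (fun p : R * R => H ((p.1 + p.2) / 2)).
Proof.
apply: measurableT_comp (mHf A mB) _.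
apply: measurable_funM => //.
exact: measurable_funD measurable_fst measurable_snd.
Qed.

Lemma stepc :
  (\int[(pi0 \x pi0)%E]_x H ((proj x.1 + proj x.2) / 2))%E =
  (\int[(nn \x nn)%E]_z H ((z.1 + z.2) / 2))%E.
Proof.
have mf : measurable_fun setT (fun x : (R * R) * (R * R) => H ((proj x.1 + proj x.2) / 2)).
  apply: measurableT_comp (mHf A mB) _.
  apply: measurable_funM => //.
  apply: measurable_funD.
    exact: measurableT_comp mproj measurable_fst.
  exact: measurableT_comp mproj measurable_snd.
rewrite (fubini_tonelli1 _ mf (fun x => Hf0 A B _)).
rewrite (fubini_tonelli1 _ mHsum (fun x => Hf0 A B _)).
rewrite /fubini_F /=.
transitivity (\int[pi0]_x (fun u => \int[nn]_v H ((u + v) / 2)) (proj x))%E.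
  apply: eq_integral => x _ /=.
  apply: (transfer_ge0 mproj hproj (phi := fun v => H ((proj x + v) / 2))).
    apply: measurableT_comp (mHf A mB) _.
    apply: measurable_funM => //.
    exact: measurable_funD.
  by move=> v; exact: Hf0.
apply: (transfer_ge0 mproj hproj).
  exact: (measurable_fun_fubini_tonelli_F _ mHsum (fun x => Hf0 A B _)).
by move=> u; apply: integral_ge0 => v _; exact: Hf0.
Qed.


Lemma stepd : Tmeas A nn B = (\int[(nn \x nn)%E]_z H ((z.1 + z.2) / 2))%E.
Proof.
rewrite /Tmeas integral_mkcond.
transitivity (\int[mu]_y \int[(nn \x nn)%E]_z Kf A B (((z.1 + z.2) / 2)%R, y))%E.
  apply: eq_integral => y _; rewrite /patch; case: ifP => yB.
    rewrite /Tdens; apply: eq_integral => z _.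
    by rewrite /Kf indicE yB mul1r (GaussE A0).
  rewrite (eq_integral (cst 0%E)) ?integral0 // => z _.
  by rewrite /Kf indicE yB mul0r.
have mf : measurable_fun setT
    (fun p : (measurableTypeR R * (R * R))%type => Kf A B ((p.2.1 + p.2.2) / 2, p.1)).
  apply: measurableT_comp (mKf A mB) _.
  apply: measurable_fun_pair; last exact: measurable_fst.
  apply: measurable_funM => //.
  apply: measurable_funD.
    exact: measurableT_comp measurable_fst measurable_snd.
  exact: measurableT_comp measurable_snd measurable_snd.
have E := @fubini_tonelli _ _ _ _ R mu (prodP nn) _ mf (fun p => Kf0 A B _).
exact: E.
Qed.

Lemma marg : Pp A pi0 (Emap @^-1` B) = Tmeas A nn B.
Proof. by rewrite stepab stepc stepd. Qed.

End Marg.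

Section Cpl.
Variables (R : realType) (A : R) (pi0 : probability (R*R)%type R).

Definition cmap (w : (R * R) * (R * R) * measurableTypeR R) : (R * R)%type :=
  (w.2 + (w.1.1.1 + w.1.2.1) / 2, w.2 + (w.1.1.2 + w.1.2.2) / 2).

Lemma mcmap : measurable_fun setT cmap.
Proof.
apply: measurable_fun_pair.
  apply: measurable_funD; first exact: measurable_snd.
  apply: measurable_funM => //; apply: measurable_funD.
    exact: measurableT_comp measurable_fst (measurableT_comp measurable_fst measurable_fst).
  exact: measurableT_comp measurable_fst (measurableT_comp measurable_snd measurable_fst).
apply: measurable_funD; first exact: measurable_snd.
apply: measurable_funM => //; apply: measurable_funD.
  exact: measurableT_comp measurable_snd (measurableT_comp measurable_fst measurable_fst).
exact: measurableT_comp measurable_snd (measurableT_comp measurable_snd measurable_fst).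
Qed.

Definition cmapM : {mfun _ >-> (R * R)%type} :=
  HB.pack cmap (isMeasurableFun.Build _ _ _ _ cmap mcmap).

Definition cpl : probability (R * R)%type R := distribution (Pp A pi0) cmapM.

Lemma cpl_coupling (n m : probability R R) : 0 < A ->
  coupling (n : set R -> \bar R) (m : set R -> \bar R) pi0 ->
  coupling (Tmeas A n) (Tmeas A m) cpl.
Proof.
move=> A0 [h1 h2]; split => B mB.
- have -> : cpl (B `*` setT) = Pp A pi0 (Emap fst @^-1` B) .
    congr (Pp A pi0 _); apply/seteqP; split => w /=; rewrite /Emap /cmap /=.
      by case.
    by move=> ?; split.
  have hp : forall C, measurable C -> pi0 (fst @^-1` C) = n C.
    move=> C mC; rewrite -h1 //; congr (pi0 _).
    by apply/seteqP; split => z /=; [move=> ?; split|case].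
  exact: (marg (nn := n) A0 measurable_fst hp mB).
- have -> : cpl (setT `*` B) = Pp A pi0 (Emap snd @^-1` B) .
    congr (Pp A pi0 _); apply/seteqP; split => w /=; rewrite /Emap /cmap /=.
      by case.
    by move=> ?; split.
  have hp : forall C, measurable C -> pi0 (snd @^-1` C) = m C.
    move=> C mC; rewrite -h2 //; congr (pi0 _).
    by apply/seteqP; split => z /=; [move=> ?; split|case].
  exact: (marg (nn := m) A0 measurable_snd hp mB).
Qed.

End Cpl.

Section Mom.
Variables (R : realType) (pi0 : probability (R*R)%type R) (nn : probability R R).
Variable proj : R * R -> R.
Hypothesis mproj : measurable_fun setT proj.
Hypothesis hproj : forall B, measurable B -> pi0 (proj @^-1` B) = nn B.
Hypothesis hint : nn.-integrable setT (fun y : R => (y ^+ 2)%:E).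

Lemma int_sq : pi0.-integrable setT (fun z => ((proj z) ^+ 2)%:E).
Proof.
case/integrableP: hint => _ hn.
apply/integrableP; split.
  apply/measurable_EFinP; exact: measurable_funX.
rewrite (transfer_ge0 mproj hproj (phi := fun y => `|(y ^+ 2)%:E|%E)) //.
apply: measurableT_comp => //; apply/measurable_EFinP; exact: measurable_funX.
Qed.

Lemma int_lin : pi0.-integrable setT (fun z => (proj z)%:E).
Proof.
apply: (@le_integrable _ _ _ pi0 setT measurableT _ (fun z => ((1 + (proj z) ^+ 2)%R)%:E)).
- exact/measurable_EFinP.
- move=> z _; change ((`|proj z|)%:E <= (`|1 + proj z ^+ 2|)%:E)%E; rewrite lee_fin.
  have h0 : 0 <= 1 + proj z ^+ 2 by rewrite addr_ge0 // sqr_ge0.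
  rewrite (ger0_norm h0).
  have := real_normK (num_real (proj z)); have := normr_ge0 (proj z); nra.
- have -> : (fun z => ((1 + proj z ^+ 2)%R)%:E) =
      ((EFin \o cst 1) \+ (fun z => ((proj z) ^+ 2)%:E)).
    by apply/funext => z /=; rewrite EFinD.
  apply: integrableD => //; last exact: int_sq.
  exact: finite_measure_integrable_cst.
Qed.

Lemma mean_transfer : (\int[pi0]_z (proj z)%:E = \int[nn]_y y%:E)%E.
Proof.
apply: (transfer mproj hproj (phi := EFin)) => //.
exact: int_lin.
Qed.

End Mom.

Definition prodQ (R : realType) (pi0 : probability (R*R)%type R) :
  probability ((R*R)*(R*R))%type R := (pi0 \x pi0)%E.

Section Cost.
Variables (R : realType) (A : R) (pi0 : probability (R*R)%type R) (n m : probability R R).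
Hypothesis h1 : forall B, measurable B -> pi0 (B `*` setT) = n B.
Hypothesis h2 : forall B, measurable B -> pi0 (setT `*` B) = m B.
Hypothesis hn : n.-integrable setT (fun y : R => (y ^+ 2)%:E).
Hypothesis hm : m.-integrable setT (fun y : R => (y ^+ 2)%:E).
Hypothesis hmean : (\int[n]_(y in setT) y%:E = \int[m]_(y in setT) y%:E)%E.

Lemma hfst B : measurable B -> pi0 (fst @^-1` B) = n B.
Proof.
move=> mB; rewrite -h1 //; congr (pi0 _).
by apply/seteqP; split => z /=; [move=> ?; split|case].
Qed.

Lemma hsnd B : measurable B -> pi0 (snd @^-1` B) = m B.
Proof.
move=> mB; rewrite -h2 //; congr (pi0 _).
by apply/seteqP; split => z /=; [move=> ?; split|case].
Qed.

Let i1sq := int_sq measurable_fst hfst hn.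
Let i2sq := int_sq measurable_snd hsnd hm.
Let i1 := int_lin measurable_fst hfst hn.
Let i2 := int_lin measurable_snd hsnd hm.

Lemma int_d2 : pi0.-integrable setT (fun z : R * R => ((z.1 - z.2) ^+ 2)%:E).
Proof.
apply: (@le_integrable _ _ _ pi0 setT measurableT _
   (fun z => ((2 * z.1 ^+ 2 + 2 * z.2 ^+ 2)%R)%:E)).
- apply/measurable_EFinP; apply: measurable_funX.
  exact: measurable_funB measurable_fst measurable_snd.
- move=> z _.
  change ((`|(z.1 - z.2) ^+ 2|)%:E <= (`|2 * z.1 ^+ 2 + 2 * z.2 ^+ 2|)%:E)%E.
  rewrite lee_fin !ger0_norm ?sqr_ge0 //; last first.
    by rewrite addr_ge0 // mulr_ge0 // sqr_ge0.
  have := sqr_ge0 (z.1 + z.2); nra.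
- have -> : (fun z : R * R => ((2 * z.1 ^+ 2 + 2 * z.2 ^+ 2)%R)%:E) =
      ((fun z => (2%:E * (z.1 ^+ 2)%:E)%E) \+ (fun z => (2%:E * (z.2 ^+ 2)%:E)%E))%E.
    by apply/funext => z /=; rewrite EFinD !EFinM.
  by apply: integrableD => //; apply: integrableZl.
Qed.

Lemma int_d : pi0.-integrable setT (fun z : R * R => (z.1 - z.2)%:E).
Proof.
have -> : (fun z : R * R => (z.1 - z.2)%:E) =
    ((fun z : R * R => z.1%:E) \- (fun z : R * R => z.2%:E))%E.
  by apply/funext => z /=; rewrite EFinB.
exact: integrableB.
Qed.

Lemma mean_d0 : (\int[pi0]_z (z.1 - z.2)%:E = 0)%E.
Proof.
under eq_integral do rewrite EFinB.
rewrite (integralB measurableT i1 i2).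
have e : (\int[pi0]_z z.1%:E = \int[pi0]_z z.2%:E)%E.
  rewrite (mean_transfer measurable_fst hfst hn) (mean_transfer measurable_snd hsnd hm).
  exact: hmean.
rewrite e subee //.
exact: (integrable_fin_num measurableT i2).
Qed.

End Cost.

Section Cost2.
Variables (R : realType) (A : R) (pi0 : probability (R*R)%type R) (n m : probability R R).
Hypothesis h1 : forall B, measurable B -> pi0 (B `*` setT) = n B.
Hypothesis h2 : forall B, measurable B -> pi0 (setT `*` B) = m B.
Hypothesis hn : n.-integrable setT (fun y : R => (y ^+ 2)%:E).
Hypothesis hm : m.-integrable setT (fun y : R => (y ^+ 2)%:E).
Hypothesis hmean : (\int[n]_(y in setT) y%:E = \int[m]_(y in setT) y%:E)%E.
Variable C : R.
Hypothesis hC : (\int[pi0]_z ((z.1 - z.2) ^+ 2)%:E = C%:E)%E.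

Let id2 := int_d2 h1 h2 hn hm.
Let id1 := int_d h1 h2 hn hm.
Let md0 := mean_d0 h1 h2 hn hm hmean.

Lemma inner (a : R) :
  (\int[pi0]_y (((a + (y.1 - y.2)) / 2) ^+ 2)%:E = (a ^+ 2 / 4 + C / 4)%:E)%E.
Proof.
transitivity (\int[pi0]_y ((((a ^+ 2 / 4)%:E + ((a / 2)%:E * (y.1 - y.2)%:E)) +
    ((4^-1 : R)%:E * ((y.1 - y.2) ^+ 2)%:E))))%E.
  by apply: eq_integral => y _; rewrite -!EFinM -!EFinD; congr EFin; field.
have ic : pi0.-integrable setT (EFin \o cst (a ^+ 2 / 4)).
  exact: finite_measure_integrable_cst.
have il : pi0.-integrable setT (fun y => ((a / 2)%R%:E * (y.1 - y.2)%:E)%E).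
  exact: integrableZl.
have iq : pi0.-integrable setT (fun y => ((4^-1:R)%:E * ((y.1 - y.2) ^+ 2)%:E)%E).
  exact: integrableZl.
have icl := integrableD measurableT ic il.
etransitivity; first exact: (integralD measurableT icl iq).
rewrite /=.
have E2 := integralD measurableT ic il; rewrite /= in E2; rewrite E2.
rewrite /=.
have E3 := integral_cst pi0 measurableT ((a ^+ 2 / 4)%R%:E); rewrite /= in E3.
rewrite E3 probability_setT mule1.
rewrite integralZl // md0 mule0 adde0 integralZl // hC -EFinM -EFinD.
by congr EFin; field.
Qed.


Lemma outer :
  (\int[pi0]_x (((x.1 - x.2) ^+ 2 / 4 + C / 4)%R)%:E = (C / 2)%:E)%E.
Proof.
have iq : pi0.-integrable setT (fun y => ((4^-1:R)%:E * ((y.1 - y.2) ^+ 2)%:E)%E).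
  exact: integrableZl.
have ic : pi0.-integrable setT (EFin \o cst (C / 4)).
  exact: finite_measure_integrable_cst.
transitivity (\int[pi0]_x (((4^-1:R)%:E * ((x.1 - x.2) ^+ 2)%:E) + (EFin \o cst (C / 4)%R) x))%E.
  by apply: eq_integral => y _ /=; rewrite -!EFinM -!EFinD; congr EFin; field.
have E := integralD measurableT iq ic; rewrite /= in E; rewrite E.
have E3 := integral_cst pi0 measurableT ((C / 4)%R%:E); rewrite /= in E3.
rewrite E3 probability_setT mule1 integralZl // hC -EFinM -EFinD.
by congr EFin; field.
Qed.

End Cost2.

Section Cost3.
Variables (R : realType) (A : R) (pi0 : probability (R*R)%type R) (n m : probability R R).
Hypothesis h1 : forall B, measurable B -> pi0 (B `*` setT) = n B.
Hypothesis h2 : forall B, measurable B -> pi0 (setT `*` B) = m B.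
Hypothesis hn : n.-integrable setT (fun y : R => (y ^+ 2)%:E).
Hypothesis hm : m.-integrable setT (fun y : R => (y ^+ 2)%:E).
Hypothesis hmean : (\int[n]_(y in setT) y%:E = \int[m]_(y in setT) y%:E)%E.
Variable C : R.
Hypothesis hC : (\int[pi0]_z ((z.1 - z.2) ^+ 2)%:E = C%:E)%E.

Definition Uf (x : (R * R) * (R * R)) : R :=
  (((x.1.1 - x.1.2) + (x.2.1 - x.2.2)) / 2) ^+ 2.

Lemma mUf : measurable_fun setT Uf.
Proof.
apply: measurable_funX; apply: measurable_funM => //.
apply: measurable_funD; apply: measurable_funB.
- exact: measurableT_comp measurable_fst measurable_fst.
- exact: measurableT_comp measurable_snd measurable_fst.
- exact: measurableT_comp measurable_fst measurable_snd.
- exact: measurableT_comp measurable_snd measurable_snd.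
Qed.

Lemma cost : (\int[cpl A pi0]_z ((z.1 - z.2) ^+ 2)%:E = (C / 2)%:E)%E.
Proof.
have mf : measurable_fun setT (fun z : R * R => ((z.1 - z.2) ^+ 2)%:E).
  apply/measurable_EFinP; apply: measurable_funX.
  exact: measurable_funB measurable_fst measurable_snd.
have f0 : {in setT, forall z : R * R, (0 <= ((z.1 - z.2) ^+ 2)%:E)%E}.
  by move=> z _; rewrite lee_fin sqr_ge0.
have E1 := ge0_integral_pushforward (@mcmap R) (Pp A pi0) measurableT mf f0.
rewrite preimage_setT in E1.
transitivity (\int[Pp A pi0]_w (Uf w.1)%:E)%E.
  etransitivity; first exact: E1.
  apply: eq_integral => w _ /=; rewrite /cmap /Uf /=; congr EFin; congr (_ ^+ 2).
  by field.
have mU : measurable_fun setT (fun w : ((R*R)*(R*R)) * measurableTypeR R => (Uf w.1)%:E).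
  apply/measurable_EFinP; exact: measurableT_comp mUf measurable_fst.
have U0 : forall w : ((R*R)*(R*R)) * measurableTypeR R, (0 <= (Uf w.1)%:E)%E.
  by move=> w; rewrite lee_fin /Uf sqr_ge0.
have E2 := @fubini_tonelli1 _ _ _ _ R (prodQ pi0) (Gn A) (fun w => (Uf w.1)%:E) mU U0.
etransitivity; first exact: E2.
rewrite /fubini_F /=.
transitivity (\int[prodQ pi0]_x (Uf x)%:E)%E.
  apply: eq_integral => x _.
  have E3 := integral_cst (Gn A) measurableT ((Uf x)%:E); rewrite /= in E3.
  by rewrite E3 probability_setT mule1.
have mU' : measurable_fun setT (fun x : (R*R)*(R*R) => (Uf x)%:E).
  by apply/measurable_EFinP; exact: mUf.
have U0' : forall w : (R*R)*(R*R), (0 <= (Uf w)%:E)%E.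
  by move=> w; rewrite lee_fin /Uf sqr_ge0.
have E4 := @fubini_tonelli1 _ _ _ _ R pi0 pi0 (fun x => (Uf x)%:E) mU' U0'.
etransitivity; first exact: E4.
rewrite /fubini_F /=.
transitivity (\int[pi0]_x (((x.1 - x.2) ^+ 2 / 4 + C / 4)%R)%:E)%E.
  apply: eq_integral => x _.
  rewrite -(inner h1 h2 hn hm hmean hC (x.1 - x.2)).
  by apply: eq_integral => y _.
exact: (outer h1 h2 hn hm hC).
Qed.

End Cost3.

Lemma key (R : realType) (A : R) (n m : probability R R) :
  0 < A ->
  n.-integrable setT (fun y : R => (y ^+ 2)%:E) ->
  m.-integrable setT (fun y : R => (y ^+ 2)%:E) ->
  (\int[n]_(y in setT) y%:E = \int[m]_(y in setT) y%:E)%E ->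
  (2%:E * W2sq (Tmeas A n) (Tmeas A m) <= W2sq (n : set R -> \bar R) (m : set R -> \bar R))%E.
Proof.
move=> A0 hn hm hmean.
apply: le_ereal_inf_tmp => _ [pi0 [h1 h2] <-].
have id2 := int_d2 h1 h2 hn hm.
have fin := integrable_fin_num measurableT id2.
set C := fine (\int[pi0]_z ((z.1 - z.2) ^+ 2)%:E)%E.
have hC : (\int[pi0]_z ((z.1 - z.2) ^+ 2)%:E = C%:E)%E by rewrite /C fineK.
rewrite hC.
have hW : (W2sq (Tmeas A n) (Tmeas A m) <= (C / 2)%:E)%E.
  apply: ereal_inf_lbound; exists (cpl A pi0).
    exact: (cpl_coupling A0 (conj h1 h2)).
  exact: (cost A h1 h2 hn hm hmean hC).
have -> : C%:E = (2%:E * (C / 2)%:E)%E by rewrite -EFinM; congr EFin; field.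
by rewrite lee_pmul2l.
Qed.

Theorem theorem2 (R : realType) (A : R) (n m : probability R R) :
  0 < A ->
  n.-integrable setT (fun y : R => (y ^+ 2)%:E) ->
  m.-integrable setT (fun y : R => (y ^+ 2)%:E) ->
  (\int[n]_(y in setT) y%:E = \int[m]_(y in setT) y%:E)%E ->
  (W2 (Tmeas A n) (Tmeas A m) <= (Num.sqrt 2)^-1%:E * W2 (n : set R -> \bar R) (m : set R -> \bar R))%E.
Proof.
move=> A0 hn hm hmean.
have := key A0 hn hm hmean.
rewrite /W2.
move: (W2sq (Tmeas A n) (Tmeas A m)) (W2sq (n : set R -> \bar R) (m : set R -> \bar R)) => X Y.
have s2 : 0 < (Num.sqrt 2 : R)^-1 by rewrite invr_gt0 sqrtr_gt0.
case: X => [x| |]; case: Y => [y| |] //=; last first.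
all: try (by move=> _; rewrite gt0_muley ?lte_fin // leey).
all: try (by move=> _; rewrite leNye).
all: try (by move=> _; rewrite lee_pinfty).
all: try (by rewrite gt0_muley ?lte_fin).
- rewrite -EFinM !lee_fin => hxy.
  have [x0|x0] := leP x 0.
    by rewrite (ler0_sqrtr x0) mulr_ge0 // ltW.
  have y0 : 0 <= y by nra.
  rewrite -sqrtrV ?ler0n // -sqrtrM ?invr_ge0 ?ler0n // ler_sqrt; last first.
    by rewrite mulr_ge0 // invr_ge0 ler0n.
  rewrite mulrC; nra.
Qed.
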